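(* Let $n\ge 3$ and let $g_*$ be the round metric of sectional curvature $1$ on $S^n$. For $i=1,2$ let $f_i:[a_i,b_i]\to\mathbb{R}$ be smooth functions such that (I) $f_i>0$, $f_i'>0$ and $f_i''>0$ on $[a_i,b_i]$; (II) the metric $dt^2+f_i(t)^2g_*$ on $[a_i,b_i]\times S^n$ has positive scalar curvature; (III) $f_1(b_1)<f_2(a_2)$ and $f_1'(b_1)=f_2'(a_2)$. Suppose the intervals are positioned (after translation) so that $a_2-b_1=(f_2(a_2)-f_1(b_1))/f_1'(b_1)$. Then there exists a smooth function $f:[a_1,b_2]\to\mathbb{R}$ such that (i) $f>0$ and $f'>0$ on $[a_1,b_2]$; (ii) $f=f_1$ on $[a_1,\frac{a_1+b_1}{2}]$; (iii) $f=f_2$ on $[\frac{a_2+b_2}{2},b_2]$; (iv) the metric $dt^2+f(t)^2g_*$ on $[a_1,b_2]\times S^n$ has positive scalar curvature. *)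

(* Defs.v *)
From Stdlib Require Import Reals.
From Coquelicot Require Import Coquelicot.
Open Scope R_scope.

(* f is smooth on the closed interval [a,b]: f is C^infinity on an open
   neighbourhood (a-eps, b+eps) of [a,b]. (By Seeley's extension theorem this
   is equivalent to smoothness on [a,b] with one-sided derivatives.) *)
Definition smooth_on (a b : R) (f : R -> R) : Prop :=
  exists eps : R, 0 < eps /\
    forall (k : nat) (t : R), a - eps < t < b + eps -> ex_derive_n f k t.

(* Scalar curvature at (t, x) of the warped product metric dt^2 + f(t)^2 g_*
   on I x S^n, where g_* is the round metric of sectional curvature 1 on S^n.
   It is independent of x and equals
     -2n f''/f + n(n-1)(1 - f'^2)/f^2. *)
Definition warped_scal (n : nat) (f : R -> R) (t : R) : R :=
  - 2 * INR n * Derive_n f 2 t / f t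
  + INR n * (INR n - 1) * (1 - (Derive f t) ^ 2) / (f t) ^ 2.

Definition warped_psc (n : nat) (a b : R) (f : R -> R) : Prop :=
  forall t, a <= t <= b -> 0 < warped_scal n f t.

(* Main.v *)
Require Import Defs.
From Stdlib Require Import Reals Lra Lia Psatz.
From Coquelicot Require Import Coquelicot.
Open Scope R_scope.

Definition Ck (U : R -> Prop) (k : nat) (f : R -> R) :=
  forall j t, (j <= k)%nat -> U t -> ex_derive_n f j t.
Definition Sm (U : R -> Prop) (f : R -> R) := forall k t, U t -> ex_derive_n f k t.

Lemma Sm_Ck U f : Sm U f <-> forall k, Ck U k f.
Proof.
  split.
  - intros H k j t _ Ht. now apply H.
  - intros H k t Ht. apply (H k k t). lia. exact Ht.
Qed.

Lemma Derive_n_S_fun f j : forall x, Derive_n (Derive f) j x = Derive_n f (S j) x.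
Proof.
  intros x. rewrite <- Nat.add_1_r. rewrite <- (Derive_n_comp f j 1 x).
  apply Derive_n_ext. intros y. reflexivity.
Qed.

Lemma Ck_S U k f : Ck U (S k) f <-> (forall t, U t -> ex_derive f t) /\ Ck U k (Derive f).
Proof.
  split.
  - intros H. split.
    + intros t Ht. exact (H 1%nat t ltac:(lia) Ht).
    + intros j t Hj Ht. destruct j as [|j]. exact I.
      change (ex_derive (Derive_n (Derive f) j) t).
      apply ex_derive_ext with (f := Derive_n f (S j)).
      { intros y. now rewrite Derive_n_S_fun. }
      exact (H (S (S j)) t ltac:(lia) Ht).
  - intros [H1 H2] j t Hj Ht. destruct j as [|j]. exact I.
    destruct j as [|j]. exact (H1 t Ht).
    change (ex_derive (Derive_n f (S j)) t).
    apply ex_derive_ext with (f := Derive_n (Derive f) j).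
    { intros y. now rewrite Derive_n_S_fun. }
    exact (H2 (S j) t ltac:(lia) Ht).
Qed.

Lemma Ck_weak U k f : Ck U (S k) f -> Ck U k f.
Proof. intros H j t Hj Ht. apply H. lia. exact Ht. Qed.

Lemma Ck_ext U k f g : open U -> (forall t, U t -> f t = g t) -> Ck U k f -> Ck U k g.
Proof.
  intros HU He H j t Hj Ht. apply ex_derive_n_ext_loc with f.
  - apply (locally_open U (fun t => f t = g t) HU He t Ht).
  - now apply H.
Qed.

Lemma Ck_loc U k f t : open U -> U t -> Ck U k f ->
  locally t (fun y => forall j, (j <= k)%nat -> ex_derive_n f j y).
Proof.
  intros HU Ht H. apply (locally_open U _ HU). 2: exact Ht.
  intros y Hy j Hj. now apply H.
Qed.

Lemma Ck_plus U k f g : open U -> Ck U k f -> Ck U k g -> Ck U k (fun x => f x + g x).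
Proof.
  intros HU Hf Hg j t Hj Ht. apply ex_derive_n_plus.
  - apply (locally_open U _ HU). 2: exact Ht. intros y Hy i Hi. apply Hf. lia. exact Hy.
  - apply (locally_open U _ HU). 2: exact Ht. intros y Hy i Hi. apply Hg. lia. exact Hy.
Qed.

Lemma Ck_scal U k a f : Ck U k f -> Ck U k (fun x => a * f x).
Proof. intros Hf j t Hj Ht. apply ex_derive_n_scal_l. now apply Hf. Qed.

Lemma Ck_opp U k f : Ck U k f -> Ck U k (fun x => - f x).
Proof. intros Hf j t Hj Ht. apply ex_derive_n_opp. now apply Hf. Qed.

Lemma Ck_const U k a : Ck U k (fun _ => a).
Proof. intros j t _ _. apply ex_derive_n_const. Qed.

Lemma Ck_minus U k f g : open U -> Ck U k f -> Ck U k g -> Ck U k (fun x => f x - g x).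
Proof. intros HU Hf Hg. apply Ck_plus; auto. now apply Ck_opp. Qed.

Lemma Ck_mult U k : open U -> forall f g, Ck U k f -> Ck U k g -> Ck U k (fun x => f x * g x).
Proof.
  intros HU. induction k as [|k IH]; intros f g Hf Hg.
  - intros j t Hj Ht. replace j with 0%nat by lia. exact I.
  - apply Ck_S in Hf as [Hf1 Hf2]. pose proof Hg as Hg0. apply Ck_S in Hg as [Hg1 Hg2].
    apply Ck_S. split.
    + intros t Ht. apply ex_derive_mult; auto.
    + apply Ck_ext with (f := fun x => Derive f x * g x + f x * Derive g x). exact HU.
      { intros t Ht. rewrite Derive_mult; auto. }
      apply Ck_plus; auto. apply IH; auto. now apply Ck_weak.
      apply IH; auto. apply Ck_weak. apply Ck_S. split; auto.
Qed.

Lemma Ck_inv U k : open U -> forall g, (forall t, U t -> g t <> 0) -> Ck U k g -> Ck U k (fun x => / g x).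
Proof.
  intros HU. induction k as [|k IH]; intros g Hnz Hg.
  - intros j t Hj Ht. replace j with 0%nat by lia. exact I.
  - pose proof Hg as Hg0. apply Ck_S in Hg as [Hg1 Hg2].
    assert (Hd : forall t, U t -> is_derive (fun y => / g y) t (- Derive g t / g t ^ 2)).
    { intros t Ht. apply is_derive_inv. apply Derive_correct. auto. auto. }
    apply Ck_S. split.
    + intros t Ht. eexists. now apply Hd.
    + apply Ck_ext with (f := fun x => - Derive g x * ((/ g x) * (/ g x))). exact HU.
      { intros t Ht. transitivity (- Derive g t / g t ^ 2). field. auto.
        symmetry. apply is_derive_unique. apply Hd; auto. }
      apply Ck_mult; auto. now apply Ck_opp.
      assert (Hi : Ck U k (fun x => / g x)) by (apply IH; auto; now apply Ck_weak).
      apply Ck_mult; auto.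
Qed.

Definition allR : R -> Prop := fun _ => True.
Lemma open_allR : open allR.
Proof. intros x _. exists (mkposreal 1 Rlt_0_1). intros; exact I. Qed.

Lemma Ck_comp_aff k : forall f a b, Ck allR k f -> Ck allR k (fun x => f (a * x + b)).
Proof.
  induction k as [|k IH]; intros f a b Hf.
  - intros j t Hj Ht. replace j with 0%nat by lia. exact I.
  - apply Ck_S in Hf as [Hf1 Hf2].
    assert (Hd : forall t, is_derive (fun x => f (a * x + b)) t (a * Derive f (a * t + b))).
    { intros t. apply (is_derive_comp f (fun x => a * x + b) t).
      apply Derive_correct, Hf1; exact I.
      auto_derive; auto. ring. }
    apply Ck_S. split.
    + intros t _. eexists; apply Hd.
    + apply Ck_ext with (f := fun x => a * Derive f (a * x + b)). exact open_allR.
      { intros t _. symmetry. apply is_derive_unique. apply Hd. }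
      apply Ck_scal. apply IH. exact Hf2.
Qed.

Definition gj (j : nat) (x : R) : R :=
  match Rlt_dec 0 x with left _ => exp (- / x) / x ^ j | right _ => 0 end.

Lemma gj_pos j x : 0 < x -> gj j x = exp (- / x) / x ^ j.
Proof. intros H. unfold gj. destruct (Rlt_dec 0 x); [reflexivity | lra]. Qed.

Lemma gj_npos j x : x <= 0 -> gj j x = 0.
Proof. intros H. unfold gj. destruct (Rlt_dec 0 x); [lra | reflexivity]. Qed.

Lemma gj_ge0 j x : 0 <= gj j x.
Proof.
  unfold gj. destruct (Rlt_dec 0 x); [|lra].
  apply Rlt_le, Rdiv_lt_0_compat. apply exp_pos. now apply pow_lt.
Qed.

Lemma exp_pow_INR z n : exp (INR n * z) = exp z ^ n.
Proof.
  induction n as [|n IH]. simpl. replace (0 * z) with 0 by ring. apply exp_0.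
  rewrite S_INR. replace ((INR n + 1) * z) with (INR n * z + z) by ring.
  rewrite exp_plus, IH. simpl. ring.
Qed.

Lemma gj_bound j x : 0 < x -> exp (- / x) / x ^ j <= INR (j + 2) ^ (j + 2) * x ^ 2.
Proof.
  intros Hx. set (N := INR (j + 2)). set (y := / x).
  assert (HN : 0 < N) by (unfold N; apply lt_0_INR; lia).
  assert (Hy : 0 < y) by (unfold y; now apply Rinv_0_lt_compat).
  assert (He : (y / N) ^ (j + 2) <= exp y).
  { assert (Ee : exp y = exp (y / N) ^ (j + 2)).
    { rewrite <- exp_pow_INR. f_equal. unfold N. field. fold N. lra. }
    rewrite Ee. apply pow_incr. split.
    apply Rlt_le, Rdiv_lt_0_compat; lra.
    pose proof (exp_ineq1 (y / N)). assert (0 < y / N) by (apply Rdiv_lt_0_compat; lra).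
    specialize (H ltac:(lra)). lra. }
  assert (Hk : (y / N) ^ (j + 2) * x ^ j = / (N ^ (j + 2) * x ^ 2)).
  { unfold y. rewrite pow_add. unfold Rdiv. rewrite Rpow_mult_distr, pow_inv, pow_inv, pow_add.
    field; repeat split; try apply pow_nonzero; lra. }
  assert (Hxj : 0 < x ^ j) by (now apply pow_lt).
  assert (Hpos : 0 < / (N ^ (j + 2) * x ^ 2)).
  { apply Rinv_0_lt_compat, Rmult_lt_0_compat; apply pow_lt; lra. }
  assert (H2 : / (N ^ (j + 2) * x ^ 2) <= exp y * x ^ j).
  { rewrite <- Hk. apply Rmult_le_compat_r; lra. }
  replace (exp (- y) / x ^ j) with (/ (exp y * x ^ j)).
  2: { unfold y. rewrite exp_Ropp. pose proof (exp_pos (/ x)). field.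
         repeat split; try apply pow_nonzero; lra. }
  replace (N ^ (j + 2) * x ^ 2) with (/ / (N ^ (j + 2) * x ^ 2)).
  2: { rewrite Rinv_inv. reflexivity. }
  apply Rinv_le_contravar; auto.
Qed.

Lemma locally_pos x : 0 < x -> locally x (fun y => 0 < y).
Proof. intros H. apply (locally_open _ _ (open_gt 0)); auto. Qed.
Lemma locally_neg x : x < 0 -> locally x (fun y => y < 0).
Proof. intros H. apply (locally_open _ _ (open_lt 0)); auto. Qed.

Lemma gj_derive j x : is_derive (gj j) x (- INR j * gj (S j) x + gj (S (S j)) x).
Proof.
  destruct (Rlt_le_dec 0 x) as [Hx|Hx].
  - rewrite !gj_pos by lra.
    apply is_derive_ext_loc with (fun y => exp (- / y) / y ^ j).
    { apply filter_imp with (2 := locally_pos x Hx). intros y Hy. now rewrite gj_pos. }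
    auto_derive. split. lra. split; auto. apply pow_nonzero; lra.
    destruct j as [|j].
    + simpl. field. lra.
    + simpl pred. rewrite S_INR. simpl. field. repeat split; try apply pow_nonzero; lra.
  - destruct (Rle_lt_or_eq_dec x 0 Hx) as [Hl|He].
    + rewrite !gj_npos by lra.
      replace (- INR j * 0 + 0) with 0 by ring.
      apply is_derive_ext_loc with (fun _ => 0).
      { apply filter_imp with (2 := locally_neg x Hl). intros y Hy. now rewrite gj_npos by lra. }
      auto_derive; auto.
    + subst x. rewrite !gj_npos by lra. replace (- INR j * 0 + 0) with 0 by ring.
      apply is_derive_Reals. intros eps Heps.
      set (C := INR (j + 2) ^ (j + 2)).
      assert (HC : 0 < C) by (unfold C; apply pow_lt, lt_0_INR; lia).
      assert (Hd : 0 < eps / C) by (apply Rdiv_lt_0_compat; lra).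
      exists (mkposreal _ Hd). intros h Hh0 Hh. simpl in Hh.
      rewrite Rplus_0_l, (gj_npos j 0) by lra. rewrite Rminus_0_r, Rminus_0_r.
      destruct (Rlt_le_dec 0 h) as [Hp|Hn].
      * rewrite gj_pos by lra. pose proof (gj_bound j h Hp) as B. fold C in B.
        assert (0 <= exp (- / h) / h ^ j) by (apply Rlt_le, Rdiv_lt_0_compat; [apply exp_pos | now apply pow_lt]).
        rewrite Rabs_pos_eq by (unfold Rdiv at 1; apply Rmult_le_pos; [lra| apply Rlt_le, Rinv_0_lt_compat; lra]).
        rewrite Rabs_pos_eq in Hh by lra.
        apply Rle_lt_trans with (C * h).
        { apply Rle_div_l. lra. replace (C * h * h) with (C * h ^ 2) by ring. lra. }
        apply Rmult_lt_reg_r with (/ C). now apply Rinv_0_lt_compat.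
        replace (C * h * / C) with h by (field; lra). exact Hh.
      * rewrite gj_npos by lra. unfold Rdiv. rewrite Rmult_0_l, Rabs_R0. lra.
Qed.

Lemma gj_smooth : forall k j, Ck allR k (gj j).
Proof.
  induction k as [|k IH]; intros j.
  - intros i t Hi _. replace i with 0%nat by lia. exact I.
  - apply Ck_S. split.
    + intros t _. eexists. apply gj_derive.
    + apply Ck_ext with (f := fun x => - INR j * gj (S j) x + gj (S (S j)) x). exact open_allR.
      { intros t _. symmetry. apply is_derive_unique. apply gj_derive. }
      apply Ck_plus. exact open_allR. apply Ck_scal. apply IH. apply IH.
Qed.

Definition Sstep (x : R) : R := gj 0 x / (gj 0 x + gj 0 (1 - x)).

Lemma Sden_pos x : 0 < gj 0 x + gj 0 (1 - x).
Proof.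
  pose proof (gj_ge0 0 x). pose proof (gj_ge0 0 (1 - x)).
  destruct (Rlt_le_dec 0 x).
  - rewrite (gj_pos 0 x) by lra. simpl. pose proof (exp_pos (- / x)). unfold Rdiv. lra.
  - rewrite (gj_pos 0 (1 - x)) by lra. simpl. pose proof (exp_pos (- / (1 - x))). unfold Rdiv. lra.
Qed.

Lemma Sstep_smooth k : Ck allR k Sstep.
Proof.
  unfold Sstep. apply Ck_mult. exact open_allR. apply gj_smooth.
  apply Ck_inv. exact open_allR. intros t _. pose proof (Sden_pos t). lra.
  apply Ck_plus. exact open_allR. apply gj_smooth.
  apply Ck_ext with (f := fun x => gj 0 ((-1) * x + 1)). exact open_allR.
  { intros t _. f_equal. ring. }
  apply Ck_comp_aff. apply gj_smooth.
Qed.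

Lemma Sstep_0 x : x <= 0 -> Sstep x = 0.
Proof. intros H. unfold Sstep. rewrite (gj_npos 0 x H). unfold Rdiv. ring. Qed.

Lemma Sstep_1 x : 1 <= x -> Sstep x = 1.
Proof.
  intros H. unfold Sstep. rewrite (gj_npos 0 (1 - x)) by lra. rewrite Rplus_0_r.
  field. pose proof (Sden_pos x). rewrite (gj_npos 0 (1 - x)) in H0 by lra. lra.
Qed.

Lemma Sstep_bounds x : 0 <= Sstep x <= 1.
Proof.
  unfold Sstep. pose proof (Sden_pos x). pose proof (gj_ge0 0 x). pose proof (gj_ge0 0 (1-x)).
  split. apply Rle_div_r; lra. apply Rle_div_l; lra.
Qed.

Definition Iv (u0 u1 : R) : R -> Prop := fun t => u0 < t < u1.
Lemma open_Iv u0 u1 : open (Iv u0 u1).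
Proof. unfold Iv. apply open_and; [apply open_gt | apply open_lt]. Qed.

Lemma Ck1_cont U f t : Ck U 1 f -> U t -> continuous f t.
Proof. intros H Ht. apply (@ex_derive_continuous R_AbsRing R_NormedModule f t). exact (H 1%nat t ltac:(lia) Ht). Qed.

Lemma Sm_cont U f t : Sm U f -> U t -> continuous f t.
Proof. intros H Ht. apply (@ex_derive_continuous R_AbsRing R_NormedModule f t). exact (H 1%nat t Ht). Qed.

Lemma Sm_ex_derive U f t : Sm U f -> U t -> ex_derive f t.
Proof. intros H Ht. exact (H 1%nat t Ht). Qed.

Lemma Sm_Dn U f m : Sm U f -> Sm U (Derive_n f m).
Proof.
  intros H k t Ht. destruct k as [|k]. exact I.
  change (ex_derive (Derive_n (Derive_n f m) k) t).
  apply ex_derive_ext with (f := Derive_n f (k + m)).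
  { intros y. now rewrite Derive_n_comp. }
  exact (H (S (k + m)) t Ht).
Qed.

Lemma Sm_D U f : Sm U f -> Sm U (Derive f).
Proof. intros H. apply (Sm_Dn U f 1) in H. intros k t Ht.
  apply ex_derive_n_ext with (f := Derive_n f 1). reflexivity. auto. Qed.

Lemma Sm_ext U f g : open U -> (forall t, U t -> f t = g t) -> Sm U f -> Sm U g.
Proof. intros HU He H. apply Sm_Ck. intros k. apply Ck_ext with f; auto. now apply Sm_Ck. Qed.
Lemma Sm_plus U f g : open U -> Sm U f -> Sm U g -> Sm U (fun x => f x + g x).
Proof. intros HU Hf Hg. apply Sm_Ck. intros k. apply Ck_plus; auto; now apply Sm_Ck. Qed.
Lemma Sm_minus U f g : open U -> Sm U f -> Sm U g -> Sm U (fun x => f x - g x).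
Proof. intros HU Hf Hg. apply Sm_Ck. intros k. apply Ck_minus; auto; now apply Sm_Ck. Qed.
Lemma Sm_mult U f g : open U -> Sm U f -> Sm U g -> Sm U (fun x => f x * g x).
Proof. intros HU Hf Hg. apply Sm_Ck. intros k. apply Ck_mult; auto; now apply Sm_Ck. Qed.
Lemma Sm_scal U a f : Sm U f -> Sm U (fun x => a * f x).
Proof. intros Hf. apply Sm_Ck. intros k. apply Ck_scal; auto; now apply Sm_Ck. Qed.
Lemma Sm_const U a : Sm U (fun _ => a).
Proof. apply Sm_Ck. intros k. apply Ck_const. Qed.
Lemma Sm_sub U V f : (forall t, V t -> U t) -> Sm U f -> Sm V f.
Proof. intros HVU H k t Ht. apply H; auto. Qed.
Lemma Sm_Sstep_aff a b : Sm allR (fun x => Sstep (a * x + b)).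
Proof. apply Sm_Ck. intros k. apply Ck_comp_aff. apply Sstep_smooth. Qed.
Lemma Sm_id U : Sm U (fun x => x).
Proof. intros k t _. apply ex_derive_n_ext with (fun x => x ^ 1). intros; ring. apply ex_derive_n_pow. Qed.

Lemma prim_derive u0 u1 g c t : Iv u0 u1 c -> Sm (Iv u0 u1) g -> Iv u0 u1 t ->
  is_derive (fun x => RInt g c x) t (g t).
Proof.
  intros Hc Hg Ht. apply (is_derive_RInt g (fun x => RInt g c x) c t).
  - apply (locally_open (Iv u0 u1)). apply open_Iv. 2: exact Ht.
    intros b Hb. apply (@RInt_correct R_CompleteNormedModule). apply (@ex_RInt_continuous R_CompleteNormedModule).
    intros z Hz. apply (Sm_cont _ _ _ Hg). unfold Iv in *.
    destruct Hz as [Hz1 Hz2]. split.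
    + apply Rlt_le_trans with (Rmin c b). apply Rmin_glb_lt; lra. exact Hz1.
    + apply Rle_lt_trans with (Rmax c b). exact Hz2. apply Rmax_lub_lt; lra.
  - now apply (Sm_cont _ _ _ Hg).
Qed.

Lemma Sm_prim u0 u1 g c : Iv u0 u1 c -> Sm (Iv u0 u1) g -> Sm (Iv u0 u1) (fun x => RInt g c x).
Proof.
  intros Hc Hg. apply Sm_Ck. intros k. destruct k as [|k].
  - intros j t Hj _. replace j with 0%nat by lia. exact I.
  - apply Ck_S. split.
    + intros t Ht. eexists. apply (prim_derive u0 u1); auto.
    + apply Ck_ext with g. apply open_Iv.
      { intros t Ht. symmetry. apply is_derive_unique. apply (prim_derive u0 u1); auto. }
      now apply Sm_Ck.
Qed.

Definition Gc (rho f : R -> R) (c t : R) : R := RInt (fun s => rho s * Derive_n f 2 s) c t.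
Definition Hc (rho f : R -> R) (c t : R) : R := RInt (Gc rho f c) c t.
Definition Fc (rho f : R -> R) (c t : R) : R := f t - Hc rho f c t.

Lemma Sm_rhoD2 u0 u1 rho f : Sm allR rho -> Sm (Iv u0 u1) f -> Sm (Iv u0 u1) (fun s => rho s * Derive_n f 2 s).
Proof.
  intros Hr Hf. apply Sm_mult. apply open_Iv. apply Sm_sub with allR. intros; exact I. exact Hr.
  now apply Sm_Dn.
Qed.

Lemma Gc_derive u0 u1 rho f c t : Iv u0 u1 c -> Sm allR rho -> Sm (Iv u0 u1) f -> Iv u0 u1 t ->
  is_derive (Gc rho f c) t (rho t * Derive_n f 2 t).
Proof.
  intros Hc Hr Hf Ht. unfold Gc. apply (prim_derive u0 u1 (fun s => rho s * Derive_n f 2 s)); auto.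
  now apply Sm_rhoD2.
Qed.

Lemma Sm_Gc u0 u1 rho f c : Iv u0 u1 c -> Sm allR rho -> Sm (Iv u0 u1) f -> Sm (Iv u0 u1) (Gc rho f c).
Proof. intros. unfold Gc. apply Sm_prim; auto. now apply Sm_rhoD2. Qed.

Lemma Hc_derive u0 u1 rho f c t : Iv u0 u1 c -> Sm allR rho -> Sm (Iv u0 u1) f -> Iv u0 u1 t ->
  is_derive (Hc rho f c) t (Gc rho f c t).
Proof. intros. unfold Hc. apply (prim_derive u0 u1); auto. now apply Sm_Gc. Qed.

Lemma Sm_Fc u0 u1 rho f c : Iv u0 u1 c -> Sm allR rho -> Sm (Iv u0 u1) f -> Sm (Iv u0 u1) (Fc rho f c).
Proof.
  intros. unfold Fc. apply Sm_minus. apply open_Iv. auto.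
  unfold Hc. apply Sm_prim; auto. now apply Sm_Gc.
Qed.

Lemma f_derive u0 u1 f t : Sm (Iv u0 u1) f -> Iv u0 u1 t -> is_derive f t (Derive f t).
Proof. intros. apply Derive_correct. now apply (Sm_ex_derive (Iv u0 u1)). Qed.

Lemma Df_derive u0 u1 f t : Sm (Iv u0 u1) f -> Iv u0 u1 t -> is_derive (Derive f) t (Derive_n f 2 t).
Proof. intros. apply Derive_correct. apply (Sm_ex_derive (Iv u0 u1)). now apply Sm_D. auto. Qed.

Lemma Fc_derive u0 u1 rho f c t : Iv u0 u1 c -> Sm allR rho -> Sm (Iv u0 u1) f -> Iv u0 u1 t ->
  is_derive (Fc rho f c) t (Derive f t - Gc rho f c t).
Proof.
  intros. unfold Fc. apply (is_derive_minus f (Hc rho f c)).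
  now apply (f_derive u0 u1). now apply (Hc_derive u0 u1).
Qed.

Lemma Fc_D u0 u1 rho f c t : Iv u0 u1 c -> Sm allR rho -> Sm (Iv u0 u1) f -> Iv u0 u1 t ->
  Derive (Fc rho f c) t = Derive f t - Gc rho f c t.
Proof. intros. apply is_derive_unique. now apply (Fc_derive u0 u1). Qed.

Lemma Fc_D2 u0 u1 rho f c t : Iv u0 u1 c -> Sm allR rho -> Sm (Iv u0 u1) f -> Iv u0 u1 t ->
  Derive_n (Fc rho f c) 2 t = (1 - rho t) * Derive_n f 2 t.
Proof.
  intros Hc Hr Hf Ht. change (Derive (Derive (Fc rho f c)) t = (1 - rho t) * Derive_n f 2 t).
  rewrite (Derive_ext_loc _ (fun x => Derive f x - Gc rho f c x)).
  - apply is_derive_unique.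
    replace ((1 - rho t) * Derive_n f 2 t) with (Derive_n f 2 t - rho t * Derive_n f 2 t) by ring.
    apply (is_derive_minus (Derive f) (Gc rho f c)).
    now apply (Df_derive u0 u1). now apply (Gc_derive u0 u1).
  - apply (locally_open (Iv u0 u1)). apply open_Iv. 2: exact Ht.
    intros y Hy. now apply (Fc_D u0 u1).
Qed.

Lemma mono_le phi dphi a b : a <= b ->
  (forall x, a <= x <= b -> is_derive phi x (dphi x)) ->
  (forall x, a <= x <= b -> 0 <= dphi x) -> phi a <= phi b.
Proof.
  intros Hab Hd Hp. destruct (MVT_gen phi a b dphi) as [c [Hc E]].
  - intros x Hx. apply Hd. rewrite Rmin_left, Rmax_right in Hx by lra. lra.
  - intros x Hx. apply continuity_pt_filterlim. apply (@ex_derive_continuous R_AbsRing R_NormedModule phi x). eexists. apply Hd.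
    rewrite Rmin_left, Rmax_right in Hx by lra. lra.
  - rewrite Rmin_left, Rmax_right in Hc by lra. specialize (Hp c Hc).
    assert (0 <= dphi c * (b - a)) by (apply Rmult_le_pos; lra). lra.
Qed.

Lemma Gc_c rho f c : Gc rho f c c = 0.
Proof. unfold Gc. apply (@RInt_point R_CompleteNormedModule). Qed.
Lemma Hc_c rho f c : Hc rho f c c = 0.
Proof. unfold Hc. apply (@RInt_point R_CompleteNormedModule). Qed.

Lemma is_derive_lin a x : is_derive (fun y => a * y) x a.
Proof. auto_derive; auto; ring. Qed.

Lemma const_on phi a b : a <= b -> (forall x, a <= x <= b -> is_derive phi x 0) -> phi a = phi b.
Proof.
  intros Hab Hd. apply Rle_antisym.
  - apply (mono_le phi (fun _ => 0)); auto. intros; lra.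
  - assert (- phi a <= - phi b).
    { apply (mono_le (fun x => - phi x) (fun _ => 0)); auto.
      intros x Hx. replace 0 with (- 0) by ring. apply (is_derive_opp phi). auto.
      intros; lra. }
    lra.
Qed.

Ltac ivt := unfold Iv in *; split; lra.

Lemma G_down u0 u1 rho f c t : Iv u0 u1 c -> Sm allR rho -> Sm (Iv u0 u1) f -> c <= t -> t < u1 ->
  (forall s, c <= s <= t -> 0 <= rho s <= 1 /\ 0 <= Derive_n f 2 s) ->
  forall s, c <= s <= t -> 0 <= Gc rho f c s <= Derive f s - Derive f c.
Proof.
  intros Hcc Hr Hf Hct Ht Hb s Hs. split.
  - rewrite <- (Gc_c rho f c). apply (mono_le _ (fun x => rho x * Derive_n f 2 x)). lra.
    + intros x Hx. apply (Gc_derive u0 u1); auto. ivt.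
    + intros x Hx. destruct (Hb x ltac:(lra)) as [[? ?] ?]. apply Rmult_le_pos; lra.
  - assert (Derive f c - Gc rho f c c <= Derive f s - Gc rho f c s).
    { apply (mono_le (fun x => Derive f x - Gc rho f c x) (fun x => Derive_n f 2 x - rho x * Derive_n f 2 x)). lra.
      + intros x Hx. apply (is_derive_minus (Derive f) (Gc rho f c)).
        apply (Df_derive u0 u1); auto; ivt. apply (Gc_derive u0 u1); auto; ivt.
      + intros x Hx. destruct (Hb x ltac:(lra)) as [[? ?] ?].
        assert (rho x * Derive_n f 2 x <= 1 * Derive_n f 2 x) by (apply Rmult_le_compat_r; lra). lra. }
    rewrite Gc_c in H. lra.
Qed.

Lemma H_down u0 u1 rho f c t : Iv u0 u1 c -> Sm allR rho -> Sm (Iv u0 u1) f -> c <= t -> t < u1 ->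
  (forall s, c <= s <= t -> 0 <= rho s <= 1 /\ 0 <= Derive_n f 2 s) ->
  0 <= Hc rho f c t <= f t - f c - Derive f c * (t - c).
Proof.
  intros Hcc Hr Hf Hct Ht Hb. pose proof (G_down u0 u1 rho f c t Hcc Hr Hf Hct Ht Hb) as HG. split.
  - rewrite <- (Hc_c rho f c). apply (mono_le _ (Gc rho f c)). lra.
    + intros x Hx. apply (Hc_derive u0 u1); auto. ivt.
    + intros x Hx. apply HG. lra.
  - assert (f c - Derive f c * c - Hc rho f c c <= f t - Derive f c * t - Hc rho f c t).
    { apply (mono_le (fun x => f x - Derive f c * x - Hc rho f c x) (fun x => Derive f x - Derive f c - Gc rho f c x)). lra.
      + intros x Hx. apply (is_derive_minus (fun x => f x - Derive f c * x) (Hc rho f c)).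
        apply (is_derive_minus f (fun x => Derive f c * x)). apply (f_derive u0 u1); auto; ivt.
        apply is_derive_lin.
        apply (Hc_derive u0 u1); auto; ivt.
      + intros x Hx. pose proof (HG x Hx). lra. }
    rewrite Hc_c in H. lra.
Qed.

Lemma G_up u0 u1 rho f c t : Iv u0 u1 c -> Sm allR rho -> Sm (Iv u0 u1) f -> t <= c -> u0 < t ->
  (forall s, t <= s <= c -> 0 <= rho s <= 1 /\ 0 <= Derive_n f 2 s) ->
  forall s, t <= s <= c -> Derive f s - Derive f c <= Gc rho f c s <= 0.
Proof.
  intros Hcc Hr Hf Hct Ht Hb s Hs. split.
  - assert (Derive f s - Gc rho f c s <= Derive f c - Gc rho f c c).
    { apply (mono_le (fun x => Derive f x - Gc rho f c x) (fun x => Derive_n f 2 x - rho x * Derive_n f 2 x)). lra.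
      + intros x Hx. apply (is_derive_minus (Derive f) (Gc rho f c)).
        apply (Df_derive u0 u1); auto; ivt. apply (Gc_derive u0 u1); auto; ivt.
      + intros x Hx. destruct (Hb x ltac:(lra)) as [[? ?] ?].
        assert (rho x * Derive_n f 2 x <= 1 * Derive_n f 2 x) by (apply Rmult_le_compat_r; lra). lra. }
    rewrite Gc_c in H. lra.
  - rewrite <- (Gc_c rho f c). apply (mono_le _ (fun x => rho x * Derive_n f 2 x)). lra.
    + intros x Hx. apply (Gc_derive u0 u1); auto. ivt.
    + intros x Hx. destruct (Hb x ltac:(lra)) as [[? ?] ?]. apply Rmult_le_pos; lra.
Qed.

Lemma H_up u0 u1 rho f c t : Iv u0 u1 c -> Sm allR rho -> Sm (Iv u0 u1) f -> t <= c -> u0 < t ->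
  (forall s, t <= s <= c -> 0 <= rho s <= 1 /\ 0 <= Derive_n f 2 s) ->
  0 <= Hc rho f c t <= Derive f c * (c - t) - f c + f t.
Proof.
  intros Hcc Hr Hf Hct Ht Hb. pose proof (G_up u0 u1 rho f c t Hcc Hr Hf Hct Ht Hb) as HG. split.
  - assert (- Hc rho f c t <= - Hc rho f c c).
    { apply (mono_le (fun x => - Hc rho f c x) (fun x => - Gc rho f c x)). lra.
      + intros x Hx. apply (is_derive_opp (Hc rho f c)). apply (Hc_derive u0 u1); auto. ivt.
      + intros x Hx. pose proof (HG x Hx). lra. }
    rewrite Hc_c in H. lra.
  - assert (Hc rho f c t + Derive f c * t - f t <= Hc rho f c c + Derive f c * c - f c).
    { apply (mono_le (fun x => Hc rho f c x + Derive f c * x - f x) (fun x => Gc rho f c x + Derive f c - Derive f x)). lra.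
      + intros x Hx. apply (is_derive_minus (fun x => Hc rho f c x + Derive f c * x) f).
        apply (is_derive_plus (Hc rho f c) (fun x => Derive f c * x)). apply (Hc_derive u0 u1); auto; ivt.
        apply is_derive_lin.
        apply (f_derive u0 u1); auto; ivt.
      + intros x Hx. pose proof (HG x Hx). lra. }
    rewrite Hc_c in H. lra.
Qed.

Lemma GH_zero u0 u1 rho f c t : Iv u0 u1 c -> Sm allR rho -> Sm (Iv u0 u1) f -> Iv u0 u1 t ->
  (forall s, Rmin t c <= s <= Rmax t c -> rho s = 0) -> Gc rho f c t = 0 /\ Hc rho f c t = 0.
Proof.
  intros Hcc Hr Hf Ht Hz.
  assert (HG : forall s, Rmin t c <= s <= Rmax t c -> Gc rho f c s = 0).
  { intros s Hs. destruct (Rle_dec s c) as [Hsc|Hsc].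
    - rewrite <- (Gc_c rho f c). apply const_on. lra. intros x Hx.
      replace 0 with (rho x * Derive_n f 2 x).
      apply (Gc_derive u0 u1); auto. unfold Iv in *.
      destruct (Rle_dec t c); [rewrite Rmin_left in Hs by lra | rewrite Rmin_right in Hs by lra]; split; lra.
      rewrite Hz. ring. destruct (Rle_dec t c).
      rewrite Rmin_left, Rmax_right in * by lra. lra. rewrite Rmin_right, Rmax_left in * by lra. lra.
    - symmetry. rewrite <- (Gc_c rho f c). apply const_on. lra. intros x Hx.
      replace 0 with (rho x * Derive_n f 2 x).
      apply (Gc_derive u0 u1); auto. unfold Iv in *.
      destruct (Rle_dec t c); [rewrite Rmax_right in Hs by lra | rewrite Rmax_left in Hs by lra]; split; lra.
      rewrite Hz. ring. destruct (Rle_dec t c).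
      rewrite Rmin_left, Rmax_right in * by lra. lra. rewrite Rmin_right, Rmax_left in * by lra. lra. }
  split. apply HG. split. apply Rmin_l. apply Rmax_l.
  destruct (Rle_dec t c) as [Htc|Htc].
  - rewrite <- (Hc_c rho f c). apply const_on. lra. intros x Hx.
    rewrite <- (HG x). apply (Hc_derive u0 u1); auto. unfold Iv in *; split; lra.
    rewrite Rmin_left, Rmax_right by lra. lra.
  - symmetry. rewrite <- (Hc_c rho f c). apply const_on. lra. intros x Hx.
    rewrite <- (HG x). apply (Hc_derive u0 u1); auto. unfold Iv in *; split; lra.
    rewrite Rmin_right, Rmax_left by lra. lra.
Qed.

Lemma Fc_line u0 u1 rho f c x1 x2 : Iv u0 u1 c -> Sm allR rho -> Sm (Iv u0 u1) f ->
  u0 < x1 -> x1 <= x2 -> x2 < u1 -> (forall s, x1 <= s <= x2 -> rho s = 1) ->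
  forall t, x1 <= t <= x2 -> Fc rho f c t = Fc rho f c x2 + Derive (Fc rho f c) x2 * (t - x2).
Proof.
  intros Hcc Hr Hf H1 H12 H2 Hone t Ht.
  set (sl := Derive f x2 - Gc rho f c x2).
  assert (Hs : forall y, x1 <= y <= x2 -> Derive f y - Gc rho f c y = sl).
  { intros y Hy. unfold sl. apply (const_on (fun x => Derive f x - Gc rho f c x)). lra.
    intros x Hx. replace 0 with (Derive_n f 2 x - rho x * Derive_n f 2 x) by (rewrite Hone by lra; ring).
    apply (is_derive_minus (Derive f) (Gc rho f c)).
    apply (Df_derive u0 u1); auto; ivt. apply (Gc_derive u0 u1); auto; ivt. }
  rewrite (Fc_D u0 u1) by (auto; ivt). fold sl.
  assert (Fc rho f c t - sl * t = Fc rho f c x2 - sl * x2).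
  { apply (const_on (fun x => Fc rho f c x - sl * x)). lra. intros x Hx.
    replace 0 with ((Derive f x - Gc rho f c x) - sl) by (rewrite Hs by lra; ring).
    apply (is_derive_minus (Fc rho f c) (fun x => sl * x)). apply (Fc_derive u0 u1); auto; ivt.
    apply is_derive_lin. }
  lra.
Qed.

Lemma cont_eps h x : continuous h x -> forall eps, 0 < eps ->
  exists del, 0 < del /\ forall t, Rabs (t - x) < del -> Rabs (h t - h x) < eps.
Proof.
  intros Hc eps He. apply continuity_pt_filterlim in Hc.
  destruct (Hc eps He) as [alp [Ha H]]. exists alp. split. lra.
  intros t Ht. destruct (Req_dec x t) as [E|E].
  - subst. rewrite Rminus_diag, Rabs_R0. lra.
  - apply (H t). split. split. exact I. exact E. exact Ht.
Qed.

Lemma bound_on h a b : a <= b -> (forall u, a <= u <= b -> continuous h u) ->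
  exists B, 0 <= B /\ forall u, a <= u <= b -> Rabs (h u) <= B.
Proof.
  intros Hab Hc. destruct (continuity_ab_maj (fun u => Rabs (h u)) a b Hab) as [M [HM _]].
  - intros c Hcc. apply (continuity_pt_comp h Rabs c). apply continuity_pt_filterlim. now apply Hc.
    apply Rcontinuity_abs.
  - exists (Rabs (h M)). split. apply Rabs_pos. exact HM.
Qed.

Definition Pq (nR : R) (F D D2 : R) := -2 * D2 * F + (nR - 1) * (1 - D ^ 2).

Lemma scal_of_P n f t : 0 < f t ->
  warped_scal n f t = INR n * Pq (INR n) (f t) (Derive f t) (Derive_n f 2 t) / (f t) ^ 2.
Proof. intros H. unfold warped_scal, Pq. field. lra. Qed.

Lemma P_of_scal n f t : (1 <= n)%nat -> 0 < f t -> 0 < warped_scal n f t ->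
  0 < Pq (INR n) (f t) (Derive f t) (Derive_n f 2 t).
Proof.
  intros Hn Hf Hs. rewrite scal_of_P in Hs by auto.
  assert (Hn' : 0 < INR n) by (apply lt_0_INR; lia).
  set (P := Pq (INR n) (f t) (Derive f t) (Derive_n f 2 t)) in *.
  assert (H2 : 0 < f t ^ 2) by (apply pow_lt; lra).
  destruct (Rle_lt_dec P 0) as [Hp|Hp]; auto.
  exfalso. assert (INR n * P / f t ^ 2 <= 0).
  { unfold Rdiv. rewrite Rmult_assoc. apply Rmult_le_0_l. lra.
    apply Rmult_le_0_r. lra. apply Rlt_le, Rinv_0_lt_compat. lra. }
  lra.
Qed.

Lemma scal_pos n f t : (1 <= n)%nat -> 0 < f t ->
  0 < Pq (INR n) (f t) (Derive f t) (Derive_n f 2 t) -> 0 < warped_scal n f t.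
Proof.
  intros Hn Hf Hp. rewrite scal_of_P by auto.
  assert (Hn' : 0 < INR n) by (apply lt_0_INR; lia).
  apply Rdiv_lt_0_compat. now apply Rmult_lt_0_compat. apply pow_lt; lra.
Qed.

Lemma piece_ok n (F f : R -> R) t : (1 <= n)%nat -> locally t (fun y => F y = f y) ->
  0 < F t -> 0 < Derive F t -> 0 < Pq (INR n) (F t) (Derive F t) (Derive_n F 2 t) ->
  0 < f t /\ 0 < Derive f t /\ 0 < warped_scal n f t.
Proof.
  intros Hn Hl H1 H2 H3.
  assert (E0 : F t = f t) by exact (locally_singleton _ _ Hl).
  assert (E1 : Derive F t = Derive f t) by (now apply Derive_ext_loc).
  assert (E2 : Derive_n F 2 t = Derive_n f 2 t) by (now apply Derive_n_ext_loc).
  split. lra. split. lra. apply scal_pos; auto. lra.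
  rewrite <- E0, <- E1, <- E2. auto.
Qed.

Lemma Pq_compare nR F D D2 f Df D2f : 1 <= nR -> 0 < F -> F <= f -> 0 <= D -> D <= Df ->
  0 <= D2 -> D2 <= D2f -> Pq nR f Df D2f <= Pq nR F D D2.
Proof.
  intros Hn HF HFf HD HDf HD2 HD2f. unfold Pq.
  assert (D2 * F <= D2f * f) by (apply Rmult_le_compat; lra).
  assert (D ^ 2 <= Df ^ 2) by (apply pow_incr; lra).
  assert ((nR - 1) * (Df ^ 2 - D ^ 2) >= 0) by (apply Rle_ge, Rmult_le_pos; lra).
  nra.
Qed.

Definition Mf (tau : R -> R) (A1 s1 b1 A2 s2 a2 : R) (t : R) : R :=
  (A1 + s1 * (t - b1)) + tau t * ((A2 + s2 * (t - a2)) - (A1 + s1 * (t - b1))).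

Lemma is_derive_val (f : R -> R) x l l' : is_derive f x l -> l = l' -> is_derive f x l'.
Proof. intros H E; now subst. Qed.

Lemma Mf_D (tau tau1 : R -> R) A1 s1 b1 A2 s2 a2 t :
  (forall x, is_derive tau x (tau1 x)) ->
  is_derive (Mf tau A1 s1 b1 A2 s2 a2) t
    (s1 + tau1 t * ((A2 + s2 * (t - a2)) - (A1 + s1 * (t - b1))) + tau t * (s2 - s1)).
Proof.
  intros Ht. unfold Mf.
  apply is_derive_val with (plus s1 (plus (mult (tau1 t) ((A2 + s2 * (t - a2)) - (A1 + s1 * (t - b1))))
     (mult (tau t) (s2 - s1)))).
  2: { unfold plus, mult; simpl. ring. }
  apply (is_derive_plus (fun t => A1 + s1 * (t - b1))
     (fun t => tau t * ((A2 + s2 * (t - a2)) - (A1 + s1 * (t - b1))))).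
  auto_derive; auto; ring.
  apply (is_derive_mult tau (fun t => A2 + s2 * (t - a2) - (A1 + s1 * (t - b1)))). apply Ht.
  auto_derive; auto; ring. intros; apply Rmult_comm.
Qed.

Lemma Mf_D2 (tau tau1 tau2 : R -> R) A1 s1 b1 A2 s2 a2 t :
  (forall x, is_derive tau x (tau1 x)) -> (forall x, is_derive tau1 x (tau2 x)) ->
  Derive_n (Mf tau A1 s1 b1 A2 s2 a2) 2 t =
    tau2 t * ((A2 + s2 * (t - a2)) - (A1 + s1 * (t - b1))) + 2 * tau1 t * (s2 - s1).
Proof.
  intros H1 H2. change (Derive (Derive (Mf tau A1 s1 b1 A2 s2 a2)) t =
    tau2 t * ((A2 + s2 * (t - a2)) - (A1 + s1 * (t - b1))) + 2 * tau1 t * (s2 - s1)).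
  rewrite (Derive_ext (Derive (Mf tau A1 s1 b1 A2 s2 a2))
    (fun t => s1 + tau1 t * ((A2 + s2 * (t - a2)) - (A1 + s1 * (t - b1))) + tau t * (s2 - s1))).
  2: { intros y. apply is_derive_unique. now apply Mf_D. }
  apply is_derive_unique.
  apply is_derive_val with (plus (plus 0 (plus (mult (tau2 t) ((A2 + s2 * (t - a2)) - (A1 + s1 * (t - b1))))
     (mult (tau1 t) (s2 - s1)))) (mult (tau1 t) (s2 - s1))).
  2: { unfold plus, mult; simpl. ring. }
  apply (is_derive_plus (fun t => s1 + tau1 t * ((A2 + s2 * (t - a2)) - (A1 + s1 * (t - b1))))
     (fun t => tau t * (s2 - s1))).
  - apply (is_derive_plus (fun _ => s1)). (auto_derive; auto).
    apply (is_derive_mult tau1 (fun t => A2 + s2 * (t - a2) - (A1 + s1 * (t - b1)))). apply H2.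
    auto_derive; auto; ring. intros; apply Rmult_comm.
  - apply is_derive_val with (plus (mult (tau1 t) (s2 - s1)) (mult (tau t) 0)).
    2: { unfold plus, mult; simpl. ring. }
    apply (is_derive_mult tau (fun _ => s2 - s1)). apply H1. (auto_derive; auto).
    intros; apply Rmult_comm.
Qed.

Lemma Sm_line A s b : Sm allR (fun t => A + s * (t - b)).
Proof.
  apply Sm_plus. apply open_allR. apply Sm_const. apply Sm_scal. apply Sm_minus. apply open_allR.
  apply Sm_id. apply Sm_const.
Qed.

Lemma Sm_Mf tau A1 s1 b1 A2 s2 a2 : Sm allR tau -> Sm allR (Mf tau A1 s1 b1 A2 s2 a2).
Proof.
  intros Ht. unfold Mf. apply Sm_plus. apply open_allR. apply Sm_line.
  apply Sm_mult. apply open_allR. exact Ht. apply Sm_minus. apply open_allR. apply Sm_line. apply Sm_line.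
Qed.

Lemma Sstep_D1 x : is_derive Sstep x (Derive Sstep x).
Proof. apply Derive_correct. exact (Sstep_smooth 1 1%nat x ltac:(lia) I). Qed.
Lemma Sstep_D2 x : is_derive (Derive Sstep) x (Derive_n Sstep 2 x).
Proof. apply Derive_correct. exact (Sstep_smooth 2 2%nat x ltac:(lia) I). Qed.

Lemma tau_D1 al be x : is_derive (fun t => Sstep (al * t + be)) x (al * Derive Sstep (al * x + be)).
Proof.
  apply is_derive_val with (scal al (Derive Sstep (al * x + be))).
  2: reflexivity.
  apply (is_derive_comp Sstep (fun t => al * t + be)). apply Sstep_D1. auto_derive; auto; ring.
Qed.
Lemma tau_D2 al be x : is_derive (fun t => al * Derive Sstep (al * t + be)) x
   (al * (al * Derive_n Sstep 2 (al * x + be))).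
Proof.
  apply (is_derive_scal (fun t => Derive Sstep (al * t + be))).
  apply is_derive_val with (scal al (Derive_n Sstep 2 (al * x + be))).
  2: reflexivity.
  apply (is_derive_comp (Derive Sstep) (fun t => al * t + be)). apply Sstep_D2. auto_derive; auto; ring.
Qed.

Lemma Sstep_cont_D1 u : continuous (Derive Sstep) u.
Proof. apply (@ex_derive_continuous R_AbsRing R_NormedModule). exact (Sstep_smooth 2 2%nat u ltac:(lia) I). Qed.
Lemma Sstep_cont_D2 u : continuous (Derive_n Sstep 2) u.
Proof. apply (@ex_derive_continuous R_AbsRing R_NormedModule). exact (Sstep_smooth 3 3%nat u ltac:(lia) I). Qed.

Lemma aff_le0 del p t : 0 < del -> t <= p -> / del * t + - (p / del) <= 0.
Proof.
  intros Hd Ht. replace (/ del * t + - (p / del)) with ((t - p) * / del) by (field; lra).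
  apply Rmult_le_0_r. lra. apply Rlt_le, Rinv_0_lt_compat; lra.
Qed.

Lemma aff_ge1 del p t : 0 < del -> p + del <= t -> 1 <= / del * t + - (p / del).
Proof.
  intros Hd Ht. replace (/ del * t + - (p / del)) with ((t - p) / del) by (field; lra).
  apply Rmult_le_reg_r with del. lra. unfold Rdiv. rewrite Rmult_assoc, Rinv_l by lra. lra.
Qed.

Lemma Sm_Pf nR U f : open U -> Sm U f -> Sm U (fun t => Pq nR (f t) (Derive f t) (Derive_n f 2 t)).
Proof.
  intros HU Hf.
  apply Sm_ext with (fun t => (-2) * Derive_n f 2 t * f t + (nR - 1) * (1 - Derive f t * Derive f t)). auto.
  { intros t _. unfold Pq. ring. }
  apply Sm_plus; auto. apply Sm_mult; auto.
  apply Sm_ext with (fun t => (-2) * Derive_n f 2 t); auto. apply Sm_scal. now apply Sm_Dn.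
  apply Sm_scal. apply Sm_minus; auto. apply Sm_const. apply Sm_mult; auto; now apply Sm_D.
Qed.

Lemma mid_est nR m f1b f2a d eta K1 K2 Mv Mp Mpp :
  3 <= nR -> 0 < m -> m < 1 -> 0 < f1b -> f1b <= f2a -> 0 < d -> 0 < eta -> eta <= 1 -> 3 <= K1 -> 0 <= K2 ->
  eta * K1 <= m / 2 -> 3 * eta * (1 + d) <= f1b / 2 ->
  eta * (2 * K2 * (f2a + 3 * (1 + d)) + (nR - 1) * (2 * K1 + K1 ^ 2) + 1) <= (nR - 1) * (1 - m ^ 2) / 2 ->
  Rabs Mpp <= eta * K2 -> Rabs (Mp - m) <= eta * K1 ->
  f1b - 3 * eta * (1 + d) <= Mv <= f2a + 3 * eta * (1 + d) ->
  0 < Mv /\ 0 < Mp /\ 0 < Pq nR Mv Mp Mpp.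
Proof.
  intros HnR Hm0 Hm1 Hf1 Hf12 Hd He0 He1 HK1 HK2 HeK1 Hed HeB Hpp Hp Hv.
  apply Rabs_le_between in Hpp. apply Rabs_le_between in Hp.
  assert (HMv : 0 < Mv) by lra.
  assert (HMp : 0 < Mp) by lra.
  split; auto. split; auto. unfold Pq.
  assert (H1 : Mpp * Mv <= eta * K2 * (f2a + 3 * (1 + d))).
  { apply Rle_trans with (eta * K2 * Mv). apply Rmult_le_compat_r; lra.
    apply Rmult_le_compat_l. apply Rmult_le_pos; lra. nra. }
  assert (H2 : Mp ^ 2 <= m ^ 2 + eta * (2 * K1 + K1 ^ 2)).
  { assert (Mp <= m + eta * K1) by lra.
    assert (Mp ^ 2 <= (m + eta * K1) ^ 2) by (apply pow_incr; lra).
    assert (eta * K1 * (eta * K1) <= eta * (K1 * K1)).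
    { replace (eta * K1 * (eta * K1)) with (eta * (eta * (K1 * K1))) by ring.
      apply Rmult_le_compat_l. lra. replace (K1 * K1) with (1 * (K1 * K1)) at 2 by ring.
      apply Rmult_le_compat_r. nra. lra. }
    assert (2 * m * (eta * K1) <= 2 * (eta * K1)) by (apply Rmult_le_compat_r; nra).
    nra. }
  assert (H3 : (nR - 1) * (1 - Mp ^ 2) >= (nR - 1) * (1 - m ^ 2) - (nR - 1) * (eta * (2 * K1 + K1 ^ 2))).
  { assert ((nR - 1) * (m ^ 2 + eta * (2 * K1 + K1 ^ 2) - Mp ^ 2) >= 0) by (apply Rle_ge, Rmult_le_pos; lra).
    nra. }
  assert (E : eta * (2 * K2 * (f2a + 3 * (1 + d)) + (nR - 1) * (2 * K1 + K1 ^ 2) + 1) =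
     2 * (eta * K2 * (f2a + 3 * (1 + d))) + (nR - 1) * (eta * (2 * K1 + K1 ^ 2)) + eta) by ring.
  assert (HC : 0 < (nR - 1) * (1 - m ^ 2)) by (apply Rmult_lt_0_compat; nra).
  rewrite E in HeB. replace (-2 * Mpp * Mv) with (-2 * (Mpp * Mv)) by ring.
  set (A := Mpp * Mv) in *. set (B := (nR - 1) * (1 - Mp ^ 2)) in *.
  set (C := (nR - 1) * (1 - m ^ 2)) in *. set (D := eta * K2 * (f2a + 3 * (1 + d))) in *.
  set (F := (nR - 1) * (eta * (2 * K1 + K1 ^ 2))) in *. lra.
Qed.

Lemma abs_prod_le x y X Y : Rabs x <= X -> Rabs y <= Y -> Rabs (x * y) <= X * Y.
Proof. intros H1 H2. rewrite Rabs_mult. apply Rmult_le_compat; auto; apply Rabs_pos. Qed.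

Lemma mid_deriv_bounds T1 T2 Tt Dl ds e1 eta al B1 B2 d :
  0 <= al -> 0 <= B1 -> 0 <= B2 -> 0 <= eta -> 0 <= d ->
  Rabs T1 <= al * B1 -> Rabs T2 <= al ^ 2 * B2 -> 0 <= Tt <= 1 ->
  Rabs Dl <= 2 * eta * (1 + d) -> Rabs ds <= 2 * eta -> Rabs e1 <= eta ->
  Rabs (T2 * Dl + 2 * T1 * ds) <= eta * (2 * al ^ 2 * B2 * (1 + d) + 4 * al * B1) /\
  Rabs (e1 + T1 * Dl + Tt * ds) <= eta * (3 + 2 * al * B1 * (1 + d)).
Proof.
  intros Hal HB1 HB2 He Hd H1 H2 Ht HD Hds He1.
  pose proof (abs_prod_le _ _ _ _ H2 HD) as P1.
  pose proof (abs_prod_le _ _ _ _ H1 HD) as P2.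
  pose proof (abs_prod_le _ _ _ _ H1 Hds) as P3.
  assert (P4 : Rabs (Tt * ds) <= 1 * (2 * eta)).
  { apply abs_prod_le; auto. rewrite Rabs_pos_eq; lra. }
  split.
  - eapply Rle_trans. apply Rabs_triang.
    assert (E2 : Rabs (2 * T1 * ds) = 2 * Rabs (T1 * ds)).
    { replace (2 * T1 * ds) with (2 * (T1 * ds)) by ring. rewrite Rabs_mult, Rabs_pos_eq; lra. }
    rewrite E2.
    assert (E : eta * (2 * al ^ 2 * B2 * (1 + d) + 4 * al * B1) =
       al ^ 2 * B2 * (2 * eta * (1 + d)) + 2 * (al * B1 * (2 * eta))) by ring.
    rewrite E. lra.
  - eapply Rle_trans. apply Rabs_triang. eapply Rle_trans. apply Rplus_le_compat_r. apply Rabs_triang.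
    assert (E : eta * (3 + 2 * al * B1 * (1 + d)) = eta + al * B1 * (2 * eta * (1 + d)) + 2 * eta) by ring.
    rewrite E. lra.
Qed.

Lemma slack_est nR F DF D2F f Df D2f m e2 pi :
  3 <= nR -> 0 < F -> F <= f -> m <= Df -> Df <= DF -> DF <= m + e2 -> 0 < m -> m < 1 ->
  0 < e2 -> e2 <= 1 -> 0 <= D2F -> D2F <= D2f -> pi / 2 < Pq nR f Df D2f ->
  e2 * (8 * (nR - 1)) <= pi -> 0 < Pq nR F DF D2F.
Proof.
  intros HnR HF HFf H1 H2 H3 Hm0 Hm1 He0 He1 HD2 HD2f HP He. unfold Pq in *.
  assert (A : D2F * F <= D2f * f) by (apply Rmult_le_compat; lra).
  assert (B : DF ^ 2 <= (m + e2) ^ 2) by (apply pow_incr; lra).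
  assert (C : m ^ 2 <= Df ^ 2) by (apply pow_incr; lra).
  assert (D : (m + e2) ^ 2 - m ^ 2 <= 3 * e2) by nra.
  assert (E : (nR - 1) * (DF ^ 2 - Df ^ 2) <= (nR - 1) * (3 * e2)) by (apply Rmult_le_compat_l; lra).
  assert (G : (nR - 1) * (1 - DF ^ 2) = (nR - 1) * (1 - Df ^ 2) - (nR - 1) * (DF ^ 2 - Df ^ 2)) by ring.
  assert (G2 : (nR - 1) * (3 * e2) = 3 / 8 * (e2 * (8 * (nR - 1)))) by field.
  assert (HZ : 0 < e2 * (8 * (nR - 1))) by (apply Rmult_lt_0_compat; lra).
  set (X := (nR - 1) * (DF ^ 2 - Df ^ 2)) in *. set (Y := (nR - 1) * (1 - Df ^ 2)) in *.
  set (Z := e2 * (8 * (nR - 1))) in *. set (W := (nR - 1) * (1 - DF ^ 2)) in *.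
  set (V := (nR - 1) * (3 * e2)) in *.
  replace (-2 * D2F * F) with (-2 * (D2F * F)) by ring.
  replace (-2 * D2f * f) with (-2 * (D2f * f)) in HP by ring. lra.
Qed.

Lemma delta_bound E2 x2 y2 E1 x1 y1 eta d :
  Rabs E2 <= eta -> Rabs x2 <= eta -> Rabs y2 <= d -> Rabs E1 <= eta -> Rabs x1 <= eta -> Rabs y1 <= d ->
  Rabs (E2 + x2 * y2 - E1 - x1 * y1) <= 2 * eta * (1 + d).
Proof.
  intros H1 H2 H3 H4 H5 H6.
  pose proof (abs_prod_le _ _ _ _ H2 H3). pose proof (abs_prod_le _ _ _ _ H5 H6).
  apply Rabs_le_between in H1. apply Rabs_le_between in H4.
  apply Rabs_le_between in H. apply Rabs_le_between in H0.
  apply Rabs_le_between. lra.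
Qed.

Theorem lemma4p4 (n : nat) (a1 b1 a2 b2 : R) (f1 f2 : R -> R) :
  (3 <= n)%nat ->
  a1 < b1 -> a2 < b2 ->
  smooth_on a1 b1 f1 -> smooth_on a2 b2 f2 ->
  (* (I) *)
  (forall t, a1 <= t <= b1 ->
     0 < f1 t /\ 0 < Derive f1 t /\ 0 < Derive_n f1 2 t) ->
  (forall t, a2 <= t <= b2 ->
     0 < f2 t /\ 0 < Derive f2 t /\ 0 < Derive_n f2 2 t) ->
  (* (II) *)
  warped_psc n a1 b1 f1 -> warped_psc n a2 b2 f2 ->
  (* (III) *)
  f1 b1 < f2 a2 -> Derive f1 b1 = Derive f2 a2 ->
  (* positioning *)
  a2 - b1 = (f2 a2 - f1 b1) / Derive f1 b1 ->
  exists f : R -> R,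
    smooth_on a1 b2 f /\
    (forall t, a1 <= t <= b2 -> 0 < f t /\ 0 < Derive f t) /\
    (forall t, a1 <= t <= (a1 + b1) / 2 -> f t = f1 t) /\
    (forall t, (a2 + b2) / 2 <= t <= b2 -> f t = f2 t) /\
    warped_psc n a1 b2 f.
Proof.
  intros Hn Hab1 Hab2 [e1 [He1 Hsm1]] [e2 [He2 Hsm2]] HI1 HI2 Hpsc1 Hpsc2 H3 Hm Hposn.
  assert (Hn1 : (1 <= n)%nat) by lia.
  set (nR := INR n).
  assert (HnR : 3 <= nR) by (unfold nR; replace 3 with (INR 3) by (simpl; ring); apply le_INR; lia).
  assert (HnR1 : 1 <= INR n) by (unfold nR in HnR; lra).
  set (m := Derive f1 b1) in *.
  destruct (HI1 b1 ltac:(lra)) as [Hf1b [Hmpos Hk1]]. change (0 < m) in Hmpos.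
  assert (HPb1 : 0 < Pq nR (f1 b1) m (Derive_n f1 2 b1)) by (apply P_of_scal; auto; apply Hpsc1; lra).
  assert (Hm1 : m < 1).
  { unfold Pq in HPb1. destruct (Rlt_le_dec m 1) as [|Hc]; auto. exfalso.
    assert (1 <= m ^ 2) by nra. assert ((nR - 1) * (1 - m ^ 2) <= 0) by nra. nra. }
  set (d := a2 - b1).
  assert (Hd : 0 < d). { unfold d; rewrite Hposn. apply Rdiv_lt_0_compat; lra. }
  assert (Hba : b1 < a2) by (unfold d in Hd; lra).
  assert (Hpos2 : f2 a2 = f1 b1 + m * d) by (unfold d; rewrite Hposn; field; lra).
  set (U1 := Iv (a1 - e1) (b1 + e1)). set (U2 := Iv (a2 - e2) (b2 + e2)).
  assert (Sm1 : Sm U1 f1) by (intros k t Ht; apply Hsm1; exact Ht).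
  assert (Sm2 : Sm U2 f2) by (intros k t Ht; apply Hsm2; exact Ht).
  destruct (bound_on (Derive Sstep) (-1) 2) as [B1 [HB1 HB1b]]. lra. intros; apply Sstep_cont_D1.
  destruct (bound_on (Derive_n Sstep 2) (-1) 2) as [B2 [HB2 HB2b]]. lra. intros; apply Sstep_cont_D2.
  set (al := 2 / d).
  assert (Hal : 0 < al) by (unfold al; apply Rdiv_lt_0_compat; lra).
  set (K1 := 3 + 2 * al * B1 * (1 + d)).
  set (K2 := 2 * al ^ 2 * B2 * (1 + d) + 4 * al * B1).
  assert (HK1 : 3 <= K1) by (unfold K1; assert (0 <= al * B1 * (1 + d)) by (apply Rmult_le_pos; [apply Rmult_le_pos|]; lra); lra).
  assert (HK2 : 0 <= K2) by (unfold K2; assert (0 <= al ^ 2 * B2 * (1 + d)) by (apply Rmult_le_pos; [apply Rmult_le_pos|]; try apply pow_le; lra);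
     assert (0 <= al * B1) by (apply Rmult_le_pos; lra); lra).
  set (Big := 2 * K2 * (f2 a2 + 3 * (1 + d)) + (nR - 1) * (2 * K1 + K1 ^ 2)).
  assert (HBig : 0 <= Big).
  { unfold Big. assert (0 <= K2 * (f2 a2 + 3 * (1 + d))) by (apply Rmult_le_pos; lra).
    assert (0 <= (nR - 1) * (2 * K1 + K1 ^ 2)) by (apply Rmult_le_pos; nra). lra. }
  assert (Hgap : 0 < (nR - 1) * (1 - m ^ 2)) by (apply Rmult_lt_0_compat; nra).
  set (eta := Rmin 1 (Rmin (m / (2 * K1)) (Rmin (f1 b1 / (6 * (1 + d))) ((nR - 1) * (1 - m ^ 2) / (2 * (Big + 1)))))).
  assert (Heta0 : 0 < eta).
  { unfold eta. repeat apply Rmin_glb_lt; try lra; apply Rdiv_lt_0_compat; lra. }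
  assert (Heta1 : eta <= 1) by apply Rmin_l.
  assert (HetaK1 : eta * K1 <= m / 2).
  { assert (eta <= m / (2 * K1)) by (eapply Rle_trans; [apply Rmin_r | apply Rmin_l]).
    apply Rmult_le_compat_r with (r := K1) in H; [|lra].
    replace (m / (2 * K1) * K1) with (m / 2) in H by (field; lra). lra. }
  assert (Hetad : 3 * eta * (1 + d) <= f1 b1 / 2).
  { assert (eta <= f1 b1 / (6 * (1 + d))) by (eapply Rle_trans; [apply Rmin_r | eapply Rle_trans; [apply Rmin_r | apply Rmin_l]]).
    apply Rmult_le_compat_r with (r := 3 * (1 + d)) in H; [|lra].
    replace (f1 b1 / (6 * (1 + d)) * (3 * (1 + d))) with (f1 b1 / 2) in H by (field; lra). lra. }
  assert (Hetaf : 3 * eta <= f1 b1 / 2).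
  { assert (0 <= eta * d) by (apply Rmult_le_pos; lra).
    replace (3 * eta * (1 + d)) with (3 * eta + 3 * (eta * d)) in Hetad by ring. lra. }
  assert (HetaB : eta * (Big + 1) <= (nR - 1) * (1 - m ^ 2) / 2).
  { assert (eta <= (nR - 1) * (1 - m ^ 2) / (2 * (Big + 1))) by (eapply Rle_trans; [apply Rmin_r | eapply Rle_trans; [apply Rmin_r | apply Rmin_r]]).
    apply Rmult_le_compat_r with (r := Big + 1) in H; [|lra].
    replace ((nR - 1) * (1 - m ^ 2) / (2 * (Big + 1)) * (Big + 1)) with ((nR - 1) * (1 - m ^ 2) / 2) in H by (field; lra). lra. }
  assert (Hb1U : U1 b1) by (unfold U1, Iv; split; lra).
  destruct (cont_eps f1 b1 (Sm_cont _ _ _ Sm1 Hb1U) eta Heta0) as [dc [Hdc Hdc']].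
  destruct (cont_eps (Derive f1) b1 (Sm_cont _ _ _ (Sm_D _ _ Sm1) Hb1U) eta Heta0) as [dd [Hdd Hdd']].
  set (del1 := Rmin (dc / 4) (Rmin (dd / 4) ((b1 - a1) / 4))).
  assert (Hdel1 : 0 < del1) by (unfold del1; repeat apply Rmin_glb_lt; lra).
  assert (Hdel1a : del1 <= dc / 4) by apply Rmin_l.
  assert (Hdel1b : del1 <= dd / 4) by (eapply Rle_trans; [apply Rmin_r|apply Rmin_l]).
  assert (Hdel1c : del1 <= (b1 - a1) / 4) by (eapply Rle_trans; [apply Rmin_r|apply Rmin_r]).
  set (p := b1 - 2 * del1).
  assert (Hfp : Rabs (f1 p - f1 b1) < eta).
  { apply Hdc'. unfold p. rewrite Rabs_left by lra. lra. }
  assert (Hdfp : Rabs (Derive f1 p - m) < eta).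
  { apply Hdd'. unfold p. rewrite Rabs_left by lra. lra. }
  set (rho1 := fun t => Sstep (/ del1 * t + - (p / del1))).
  assert (Smr1 : Sm allR rho1) by apply Sm_Sstep_aff.
  assert (rho1_0 : forall t, t <= p -> rho1 t = 0) by (intros t Ht; apply Sstep_0, aff_le0; lra).
  assert (rho1_1 : forall t, p + del1 <= t -> rho1 t = 1) by (intros t Ht; apply Sstep_1, aff_ge1; lra).
  assert (rho1_b : forall t, 0 <= rho1 t <= 1) by (intros t; apply Sstep_bounds).
  assert (HpU : U1 p) by (unfold U1, Iv, p; split; lra).
  set (F1 := Fc rho1 f1 p).
  assert (Hcond1 : forall s, p <= s <= b1 -> 0 <= rho1 s <= 1 /\ 0 <= Derive_n f1 2 s).
  { intros s Hs. split. apply rho1_b. destruct (HI1 s ltac:(unfold p in *; lra)) as [_ [_ ?]]. lra. }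
  assert (HG1 := G_down _ _ rho1 f1 p b1 HpU Smr1 Sm1 ltac:(unfold p; lra) ltac:(lra) Hcond1).
  assert (HH1 : forall t, p <= t <= b1 -> 0 <= Hc rho1 f1 p t <= f1 t - f1 p - Derive f1 p * (t - p)).
  { intros t Ht. apply (H_down (a1 - e1) (b1 + e1)); auto; try lra. intros s Hs. apply Hcond1. lra. }
  assert (HZ1 : forall t, a1 - e1 < t <= p -> Gc rho1 f1 p t = 0 /\ Hc rho1 f1 p t = 0).
  { intros t Ht. apply (GH_zero (a1 - e1) (b1 + e1)); auto. unfold Iv; split; unfold p in *; lra.
    intros s Hs. apply rho1_0. rewrite Rmax_right in Hs by lra. lra. }
  assert (HL1 : forall t, p + del1 <= t <= b1 -> F1 t = F1 b1 + Derive F1 b1 * (t - b1)).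
  { intros t Ht. apply (Fc_line (a1 - e1) (b1 + e1) rho1 f1 p (p + del1) b1); auto; try (unfold p in *; lra).
    intros s Hs. apply rho1_1. lra. }
  assert (Ha2U : U2 a2) by (unfold U2, Iv; split; lra).
  set (Pf2 := fun t => Pq nR (f2 t) (Derive f2 t) (Derive_n f2 2 t)).
  assert (SmP2 : Sm U2 Pf2) by (apply Sm_Pf; [apply open_Iv | exact Sm2]).
  destruct (HI2 a2 ltac:(lra)) as [Hf2a [Hm2pos Hk2]].
  set (pi2 := Pf2 a2).
  assert (Hpi2 : 0 < pi2) by (unfold pi2, Pf2; apply P_of_scal; auto; apply Hpsc2; lra).
  set (eta2 := Rmin eta (pi2 / (8 * (nR - 1)))).
  assert (Heta2 : 0 < eta2) by (unfold eta2; apply Rmin_glb_lt; [lra | apply Rdiv_lt_0_compat; lra]).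
  assert (Heta2a : eta2 <= eta) by apply Rmin_l.
  assert (Heta2b : eta2 * (8 * (nR - 1)) <= pi2).
  { assert (eta2 <= pi2 / (8 * (nR - 1))) by apply Rmin_r.
    apply Rmult_le_compat_r with (r := 8 * (nR - 1)) in H; [|lra].
    replace (pi2 / (8 * (nR - 1)) * (8 * (nR - 1))) with pi2 in H by (field; lra). lra. }
  destruct (cont_eps (Derive f2) a2 (Sm_cont _ _ _ (Sm_D _ _ Sm2) Ha2U) eta2 Heta2) as [da [Hda Hda']].
  destruct (cont_eps Pf2 a2 (Sm_cont _ _ _ SmP2 Ha2U) (pi2 / 2) ltac:(lra)) as [db [Hdb Hdb']].
  set (del2 := Rmin (da / 2) (Rmin (db / 2) (Rmin ((b2 - a2) / 2) (eta / 2)))).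
  assert (Hdel2 : 0 < del2) by (unfold del2; repeat apply Rmin_glb_lt; lra).
  assert (Hdel2a : del2 <= da / 2) by apply Rmin_l.
  assert (Hdel2b : del2 <= db / 2) by (eapply Rle_trans; [apply Rmin_r|apply Rmin_l]).
  assert (Hdel2c : del2 <= (b2 - a2) / 2) by (eapply Rle_trans; [apply Rmin_r| eapply Rle_trans; [apply Rmin_r|apply Rmin_l]]).
  assert (Hdel2d : del2 <= eta / 2) by (eapply Rle_trans; [apply Rmin_r| eapply Rle_trans; [apply Rmin_r|apply Rmin_r]]).
  set (q := a2 + del2).
  assert (Hdfq : Rabs (Derive f2 q - Derive f2 a2) < eta2).
  { apply Hda'. unfold q. rewrite Rabs_pos_eq by lra. lra. }
  assert (HPnear : forall t, a2 <= t <= q -> pi2 / 2 < Pf2 t).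
  { intros t Ht. assert (Rabs (Pf2 t - pi2) < pi2 / 2) by (apply Hdb'; rewrite Rabs_pos_eq by lra; unfold q in *; lra).
    apply Rabs_def2 in H. lra. }
  set (rho2 := fun t => 1 - Sstep (/ del2 * t + - (a2 / del2))).
  assert (Smr2 : Sm allR rho2) by (apply Sm_minus; [apply open_allR | apply Sm_const | apply Sm_Sstep_aff]).
  assert (rho2_0 : forall t, q <= t -> rho2 t = 0) by (intros t Ht; unfold rho2; rewrite Sstep_1; [ring | apply aff_ge1; unfold q in *; lra]).
  assert (rho2_1 : forall t, t <= a2 -> rho2 t = 1) by (intros t Ht; unfold rho2; rewrite Sstep_0; [ring | apply aff_le0; lra]).
  assert (rho2_b : forall t, 0 <= rho2 t <= 1) by (intros t; unfold rho2; pose proof (Sstep_bounds (/ del2 * t + - (a2 / del2))); lra).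
  assert (HqU : U2 q) by (unfold U2, Iv, q; split; lra).
  set (F2 := Fc rho2 f2 q).
  assert (Hcond2 : forall s, a2 <= s <= q -> 0 <= rho2 s <= 1 /\ 0 <= Derive_n f2 2 s).
  { intros s Hs. split. apply rho2_b. destruct (HI2 s ltac:(unfold q in *; lra)) as [_ [_ ?]]. lra. }
  assert (HG2 := G_up _ _ rho2 f2 q a2 HqU Smr2 Sm2 ltac:(unfold q; lra) ltac:(lra) Hcond2).
  assert (HH2 : forall t, a2 <= t <= q -> 0 <= Hc rho2 f2 q t <= Derive f2 q * (q - t) - f2 q + f2 t).
  { intros t Ht. apply (H_up (a2 - e2) (b2 + e2)); auto; try lra. intros s Hs. apply Hcond2. lra. }
  assert (HZ2 : forall t, q <= t < b2 + e2 -> Gc rho2 f2 q t = 0 /\ Hc rho2 f2 q t = 0).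
  { intros t Ht. apply (GH_zero (a2 - e2) (b2 + e2)); auto. unfold Iv; split; unfold q in *; lra.
    intros s Hs. apply rho2_0. rewrite Rmin_right in Hs by lra. lra. }
  assert (HL2 : forall y, a2 - e2 < y <= a2 -> F2 y = F2 a2 + Derive F2 a2 * (y - a2)).
  { intros y Hy. apply (Fc_line (a2 - e2) (b2 + e2) rho2 f2 q y a2); auto; try (unfold q in *; lra).
    intros s Hs. apply rho2_1. lra. }
  assert (Hp1 : a1 <= p <= b1) by (unfold p; lra).
  destruct (HI1 p Hp1) as [Hf1p [HDf1p _]].
  apply Rabs_def2 in Hfp. apply Rabs_def2 in Hdfp. apply Rabs_def2 in Hdfq.
  rewrite <- Hm in Hdfq.
  set (s1 := Derive F1 b1).
  assert (Hs1 : m - eta <= s1 <= m).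
  { unfold s1, F1. rewrite (Fc_D (a1 - e1) (b1 + e1)) by auto. fold m.
    destruct (HG1 b1 ltac:(unfold p; lra)) as [Ga Gb]. fold m in Gb. lra. }
  set (A1v := F1 b1).
  assert (HA1 : f1 b1 - eta <= A1v <= f1 b1).
  { unfold A1v, F1, Fc. destruct (HH1 b1 ltac:(unfold p; lra)) as [Ha Hb].
    assert (0 <= Derive f1 p * (b1 - p)) by (apply Rmult_le_pos; [lra | unfold p; lra]). lra. }
  assert (HDf2m : forall t, a2 <= t <= b2 -> m <= Derive f2 t).
  { intros t Ht. rewrite Hm. apply (mono_le (Derive f2) (Derive_n f2 2)). lra.
    intros x Hx. apply (Df_derive (a2 - e2) (b2 + e2)); auto. unfold Iv; split; lra.
    intros x Hx. destruct (HI2 x ltac:(lra)) as [_ [_ ?]]. lra. }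
  set (s2 := Derive F2 a2).
  assert (Hs2 : m <= s2 <= m + eta2).
  { unfold s2, F2. rewrite (Fc_D (a2 - e2) (b2 + e2)) by auto. rewrite <- Hm.
    destruct (HG2 a2 ltac:(unfold q; lra)) as [Ga Gb]. rewrite <- Hm in Ga. lra. }
  assert (Hf2q : f2 a2 <= f2 q).
  { apply (mono_le f2 (Derive f2)). unfold q; lra.
    intros x Hx. apply (f_derive (a2 - e2) (b2 + e2)); auto. unfold Iv; split; unfold q in *; lra.
    intros x Hx. destruct (HI2 x ltac:(unfold q in *; lra)) as [_ [? _]]. lra. }
  set (A2v := F2 a2).
  assert (HA2 : f2 a2 - eta <= A2v <= f2 a2).
  { unfold A2v, F2, Fc. destruct (HH2 a2 ltac:(unfold q; lra)) as [Ha Hb].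
    assert (Derive f2 q * (q - a2) <= 2 * del2).
    { replace (q - a2) with del2 by (unfold q; ring). apply Rmult_le_compat_r; lra. }
    lra. }
  set (be := - (b1 + d / 4) * al).
  set (tau := fun t => Sstep (al * t + be)).
  set (tau1 := fun t => al * Derive Sstep (al * t + be)).
  set (tau2 := fun t => al * (al * Derive_n Sstep 2 (al * t + be))).
  assert (Htau1 : forall x, is_derive tau x (tau1 x)) by (intros x; apply tau_D1).
  assert (Htau2 : forall x, is_derive tau1 x (tau2 x)) by (intros x; apply tau_D2).
  assert (Hu : forall t, al * t + be = al * (t - b1 - d / 4)) by (intros t; unfold be; ring).
  assert (tau_0 : forall t, t <= b1 + d / 4 -> tau t = 0).
  { intros t Ht. unfold tau. apply Sstep_0. rewrite Hu. apply Rmult_le_0_l; lra. }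
  assert (tau_1 : forall t, b1 + 3 * d / 4 <= t -> tau t = 1).
  { intros t Ht. unfold tau. apply Sstep_1. rewrite Hu.
    replace 1 with (al * (d / 2)) by (unfold al; field; lra). apply Rmult_le_compat_l; lra. }
  assert (Hurange : forall t, b1 <= t <= a2 -> -1 <= al * t + be <= 2).
  { intros t Ht. rewrite Hu.
    assert (al * (- (d / 4)) <= al * (t - b1 - d / 4) <= al * (3 * d / 4)).
    { split; apply Rmult_le_compat_l; unfold d in *; lra. }
    replace (al * (- (d / 4))) with (- (1 / 2)) in H by (unfold al; field; lra).
    replace (al * (3 * d / 4)) with (3 / 2) in H by (unfold al; field; lra). lra. }
  set (M := Mf tau A1v s1 b1 A2v s2 a2).
  assert (SmM : Sm allR M) by (apply Sm_Mf, Sm_Sstep_aff).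
  set (f := fun t => if Rle_dec t b1 then F1 t else if Rle_dec t a2 then M t else F2 t).
  assert (LE1 : forall t, t < b1 -> locally t (fun y => F1 y = f y)).
  { intros t Ht. apply (locally_open (fun y => y < b1)). apply open_lt. 2: exact Ht.
    intros y Hy. unfold f. destruct (Rle_dec y b1); [reflexivity | lra]. }
  assert (LE2 : forall t, b1 <= t < a2 -> locally t (fun y => M y = f y)).
  { intros t Ht. apply (locally_open (Iv (p + del1) a2)). apply open_Iv.
    2: { unfold Iv, p; split; lra. }
    intros y [Hy1 Hy2]. unfold f. destruct (Rle_dec y b1) as [Hyb|Hyb].
    - rewrite (HL1 y) by lra. unfold M, Mf. rewrite tau_0 by lra. fold A1v s1. ring.
    - destruct (Rle_dec y a2); [reflexivity | lra]. }
  assert (LE3 : forall t, a2 <= t < b2 + e2 -> locally t (fun y => F2 y = f y)).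
  { intros t Ht. apply (locally_open (Iv (Rmax (b1 + 3 * d / 4) (a2 - e2)) (b2 + e2))). apply open_Iv.
    2: { unfold Iv; split. apply Rmax_lub_lt; unfold d in *; lra. lra. }
    intros y [Hy0 Hy2]. pose proof (Rle_lt_trans _ _ _ (Rmax_l _ _) Hy0) as Hy1. pose proof (Rle_lt_trans _ _ _ (Rmax_r _ _) Hy0) as Hy3.
    unfold f. destruct (Rle_dec y b1) as [Hyb|Hyb]. lra.
    destruct (Rle_dec y a2) as [Hya|Hya].
    - rewrite (HL2 y) by lra. unfold M, Mf. rewrite tau_1 by lra. fold A2v s2. ring.
    - reflexivity. }
  assert (SmF1 : Sm U1 F1) by (apply Sm_Fc; auto).
  assert (SmF2 : Sm U2 F2) by (apply Sm_Fc; auto).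
  exists f. split.
  { exists (Rmin e1 e2). split. apply Rmin_glb_lt; lra.
    intros k t Ht. pose proof (Rmin_l e1 e2). pose proof (Rmin_r e1 e2).
    destruct (Rlt_le_dec t b1) as [H1|H1].
    - apply ex_derive_n_ext_loc with F1. apply LE1; lra. apply SmF1. unfold U1, Iv; split; lra.
    - destruct (Rlt_le_dec t a2) as [H2|H2].
      + apply ex_derive_n_ext_loc with M. apply LE2; lra. apply SmM. exact I.
      + apply ex_derive_n_ext_loc with F2. apply LE3; lra. apply SmF2. unfold U2, Iv; split; lra. }
  assert (ALL : forall t, a1 <= t <= b2 -> 0 < f t /\ 0 < Derive f t /\ 0 < warped_scal n f t).
  { intros t Ht.
    destruct (Rlt_le_dec t b1) as [Hb|Hb].
    - assert (HtU : U1 t) by (unfold U1, Iv; split; lra).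
      apply (piece_ok n F1 f t Hn1 (LE1 t Hb)).
      + destruct (Rle_lt_dec t p) as [Htp|Htp].
        * destruct (HZ1 t ltac:(lra)) as [_ HZ]. unfold F1, Fc. rewrite HZ.
          destruct (HI1 t ltac:(lra)) as [? _]. lra.
        * destruct (HH1 t ltac:(lra)) as [Ha Hb'].
          assert (0 <= Derive f1 p * (t - p)) by (apply Rmult_le_pos; lra).
          unfold F1, Fc. lra.
      + unfold F1. rewrite (Fc_D (a1 - e1) (b1 + e1)) by auto.
        destruct (Rle_lt_dec t p) as [Htp|Htp].
        * destruct (HZ1 t ltac:(lra)) as [HZ _]. rewrite HZ.
          destruct (HI1 t ltac:(lra)) as [_ [? _]]. lra.
        * destruct (HG1 t ltac:(lra)). lra.
      + unfold F1. rewrite (Fc_D (a1 - e1) (b1 + e1)), (Fc_D2 (a1 - e1) (b1 + e1)) by auto.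
        pose proof (P_of_scal n f1 t Hn1 ltac:(destruct (HI1 t ltac:(lra)); lra) (Hpsc1 t ltac:(lra))) as HP.
        fold nR in HP. destruct (HI1 t ltac:(lra)) as [Hf1t [HDf1t HD2f1t]].
        destruct (Rle_lt_dec t p) as [Htp|Htp].
        * destruct (HZ1 t ltac:(lra)) as [HG HH]. unfold Fc. rewrite HG, HH, rho1_0 by lra.
          replace (f1 t - 0) with (f1 t) by ring. replace (Derive f1 t - 0) with (Derive f1 t) by ring.
          replace ((1 - 0) * Derive_n f1 2 t) with (Derive_n f1 2 t) by ring. exact HP.
        * destruct (HG1 t ltac:(lra)). destruct (HH1 t ltac:(lra)).
          assert (0 <= Derive f1 p * (t - p)) by (apply Rmult_le_pos; lra).
          eapply Rlt_le_trans. exact HP. unfold Fc. pose proof (rho1_b t).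
          assert ((1 - rho1 t) * Derive_n f1 2 t <= 1 * Derive_n f1 2 t) by (apply Rmult_le_compat_r; lra).
          assert (0 <= (1 - rho1 t) * Derive_n f1 2 t) by (apply Rmult_le_pos; lra).
          apply Pq_compare; lra.
    - destruct (Rlt_le_dec t a2) as [Ha|Ha].
      + assert (Htr : b1 <= t <= a2) by lra.
        pose proof (Hurange t Htr) as Hur.
        set (Dl := (A2v + s2 * (t - a2)) - (A1v + s1 * (t - b1))).
        assert (HDl : Rabs Dl <= 2 * eta * (1 + d)).
        { replace Dl with ((A2v - f2 a2) + (s2 - m) * (t - a2) - (A1v - f1 b1) - (s1 - m) * (t - b1))
            by (unfold Dl; rewrite Hpos2; unfold d; ring).
          apply delta_bound; apply Rabs_le; unfold d in *; lra. }
        assert (EM1 : Derive M t = s1 + tau1 t * Dl + tau t * (s2 - s1)).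
        { apply is_derive_unique. unfold M, Dl. apply Mf_D. exact Htau1. }
        assert (EM2 : Derive_n M 2 t = tau2 t * Dl + 2 * tau1 t * (s2 - s1)).
        { unfold M, Dl. apply Mf_D2; auto. }
        assert (HT1 : Rabs (tau1 t) <= al * B1).
        { unfold tau1. rewrite Rabs_mult, (Rabs_pos_eq al) by lra. apply Rmult_le_compat_l. lra. apply HB1b. exact Hur. }
        assert (HT2 : Rabs (tau2 t) <= al ^ 2 * B2).
        { unfold tau2. rewrite !Rabs_mult, (Rabs_pos_eq al) by lra. replace (al ^ 2 * B2) with (al * (al * B2)) by ring.
          apply Rmult_le_compat_l. lra. apply Rmult_le_compat_l. lra. apply HB2b. exact Hur. }
        assert (Htt : 0 <= tau t <= 1) by apply Sstep_bounds.
        assert (Hds : Rabs (s2 - s1) <= 2 * eta) by (apply Rabs_le; lra).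
        assert (He1' : Rabs (s1 - m) <= eta) by (apply Rabs_le; lra).
        destruct (mid_deriv_bounds (tau1 t) (tau2 t) (tau t) Dl (s2 - s1) (s1 - m) eta al B1 B2 d) as [MB1 MB2]; try lra; auto.
        assert (HMv : f1 b1 - 3 * eta * (1 + d) <= M t <= f2 a2 + 3 * eta * (1 + d)).
        { replace (M t) with (f1 b1 + m * (t - b1) + (A1v - f1 b1) + (s1 - m) * (t - b1) + tau t * Dl)
             by (unfold M, Mf, Dl; ring).
          assert (P1 : Rabs ((s1 - m) * (t - b1)) <= eta * d) by (apply abs_prod_le; auto; apply Rabs_le; unfold d; lra).
          assert (P2 : Rabs (tau t * Dl) <= 1 * (2 * eta * (1 + d))) by (apply abs_prod_le; auto; rewrite Rabs_pos_eq; lra).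
          assert (P3 : 0 <= m * (t - b1) <= m * d) by (split; [apply Rmult_le_pos | apply Rmult_le_compat_l]; unfold d; lra).
          apply Rabs_le_between in P1. apply Rabs_le_between in P2. rewrite Hpos2. lra. }
        assert (HM2 : Rabs (Derive_n M 2 t) <= eta * K2) by (rewrite EM2; exact MB1).
        assert (HM1 : Rabs (Derive M t - m) <= eta * K1).
        { rewrite EM1. replace (s1 + tau1 t * Dl + tau t * (s2 - s1) - m) with ((s1 - m) + tau1 t * Dl + tau t * (s2 - s1)) by ring.
          exact MB2. }
        unfold Big in HetaB.
        destruct (mid_est nR m (f1 b1) (f2 a2) d eta K1 K2 (M t) (Derive M t) (Derive_n M 2 t)) as [Q1 [Q2 Q3]]; auto; try lra.
        apply (piece_ok n M f t Hn1 (LE2 t ltac:(lra))); auto.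
      + assert (HtU : U2 t) by (unfold U2, Iv; split; lra).
        apply (piece_ok n F2 f t Hn1 (LE3 t ltac:(lra))).
        * destruct (Rle_lt_dec q t) as [Htq|Htq].
          -- destruct (HZ2 t ltac:(lra)) as [_ HZ]. unfold F2, Fc. rewrite HZ.
             destruct (HI2 t ltac:(lra)) as [? _]. lra.
          -- destruct (HH2 t ltac:(lra)) as [Ha' Hb'].
             assert (Derive f2 q * (q - t) <= 2 * del2).
             { assert (HDq : 0 < Derive f2 q) by (destruct (HI2 q ltac:(unfold q in *; lra)) as [_ [? _]]; lra).
               assert (q - t <= del2) by (unfold q in *; lra).
               apply Rmult_le_compat; lra. }
             unfold F2, Fc. lra.
        * unfold F2. rewrite (Fc_D (a2 - e2) (b2 + e2)) by auto.
          destruct (Rle_lt_dec q t) as [Htq|Htq].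
          -- destruct (HZ2 t ltac:(lra)) as [HZ _]. rewrite HZ.
             destruct (HI2 t ltac:(lra)) as [_ [? _]]. lra.
          -- destruct (HG2 t ltac:(lra)). destruct (HI2 t ltac:(lra)) as [_ [? _]]. lra.
        * unfold F2. rewrite (Fc_D (a2 - e2) (b2 + e2)), (Fc_D2 (a2 - e2) (b2 + e2)) by auto.
          pose proof (P_of_scal n f2 t Hn1 ltac:(destruct (HI2 t ltac:(lra)); lra) (Hpsc2 t ltac:(lra))) as HP.
          fold nR in HP. destruct (HI2 t ltac:(lra)) as [Hf2t [HDf2t HD2f2t]].
          destruct (Rle_lt_dec q t) as [Htq|Htq].
          -- destruct (HZ2 t ltac:(lra)) as [HG HH]. unfold Fc. rewrite HG, HH, rho2_0 by lra.
             replace (f2 t - 0) with (f2 t) by ring. replace (Derive f2 t - 0) with (Derive f2 t) by ring.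
             replace ((1 - 0) * Derive_n f2 2 t) with (Derive_n f2 2 t) by ring. exact HP.
          -- destruct (HG2 t ltac:(lra)) as [Ga Gb]. destruct (HH2 t ltac:(lra)) as [Ha' Hb'].
             assert (HFpos : 0 < Fc rho2 f2 q t).
             { assert (Derive f2 q * (q - t) <= 2 * del2).
               { assert (HDq : 0 < Derive f2 q) by (destruct (HI2 q ltac:(unfold q in *; lra)) as [_ [? _]]; lra).
                 assert (q - t <= del2) by (unfold q in *; lra).
                 apply Rmult_le_compat; lra. }
               unfold Fc. lra. }
             pose proof (HDf2m t ltac:(lra)) as Hmt. pose proof (rho2_b t).
             assert ((1 - rho2 t) * Derive_n f2 2 t <= 1 * Derive_n f2 2 t) by (apply Rmult_le_compat_r; lra).
             assert (0 <= (1 - rho2 t) * Derive_n f2 2 t) by (apply Rmult_le_pos; lra).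
             apply (slack_est nR _ _ _ (f2 t) (Derive f2 t) (Derive_n f2 2 t) m eta2 pi2); try lra.
             unfold Fc; lra.
             apply HPnear; lra.
  }
  split. { intros t Ht. destruct (ALL t Ht) as [? [? _]]. split; auto. }
  split.
  { intros t Ht. unfold f. destruct (Rle_dec t b1) as [_|Hc]; [|unfold p in *; lra].
    unfold F1, Fc. destruct (HZ1 t ltac:(unfold p in *; lra)) as [_ HZ]. rewrite HZ. ring. }
  split.
  { intros t Ht. unfold f. destruct (Rle_dec t b1) as [Hc|_]; [lra|].
    destruct (Rle_dec t a2) as [Hc|_]; [unfold q in *; lra|].
    unfold F2, Fc. destruct (HZ2 t ltac:(unfold q in *; lra)) as [_ HZ]. rewrite HZ. ring. }
  { intros t Ht. destruct (ALL t Ht) as [_ [_ ?]]. auto. }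
Qed.
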